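(* Let $T\in\mathbb R^{m\times n}$ be injective and satisfy the positive cone condition, and let $y\in\mathbb R^m$. Let $0<\mu<\lambda$ and suppose $N(\lambda)\subset N(\mu)$ and $\xi_\lambda^i=\xi_\mu^i$ for all $i\in I(\lambda)$. Then $$x_\mu^i\,\mathrm{sign}(x_\lambda^i)\le|x_\lambda^i|\qquad\text{for all }i\in I(\lambda).$$
   Context: For $\lambda>0$, $x_\lambda$ is the unique minimizer of $x\mapsto\frac{\lambda}{2}\|Tx-y\|_2^2+\|x\|_1$ on $\mathbb R^n$, and $\xi_\lambda:=\lambda T^{T}(y-Tx_\lambda)$, which satisfies $\xi_\lambda^i\in[-1,1]$ and $\xi_\lambda^i=\mathrm{sign}(x_\lambda^i)$ when $x_\lambda^i\ne0$. $N(\lambda)=\{i:x_\lambda^i=0\}$, $I(\lambda)=\{i:x_\lambda^i\ne0\}$. Positive cone condition: for every nonempty $J\subset\{1,\dots,n\}$, letting $T^J$ be the submatrix of $T$ consisting of the columns indexed by $J$ and $S_J=((T^J)^{T}T^J)^{-1}$, one has $(S_J)_{i,i}-\sum_{j\ne i}|(S_J)_{i,j}|\ge0$ for all $i\in J$ (equivalently, $(T^TT)^{-1}$ is diagonally dominant in this sense). *)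

(* Defs.v *)
From HB Require Import structures.
From mathcomp Require Import all_boot all_order all_algebra.
From mathcomp Require Import reals.
Set Implicit Arguments. Unset Strict Implicit. Unset Printing Implicit Defensive.
Import Order.TTheory GRing.Theory Num.Theory.
Local Open Scope ring_scope.

Section Lasso.
Variables (R : realType) (m n : nat).

Definition sqnorm2 (k : nat) (v : 'cV[R]_k) : R := \sum_(i < k) (v i 0) ^+ 2.
Definition norm1 (k : nat) (v : 'cV[R]_k) : R := \sum_(i < k) `|v i 0|.

Definition lasso_obj (lam : R) (T : 'M[R]_(m, n)) (y : 'cV[R]_m) (x : 'cV[R]_n) : R :=
  lam / 2 * sqnorm2 (T *m x - y) + norm1 x.

Definition is_unique_lasso_min (lam : R) (T : 'M[R]_(m, n)) (y : 'cV[R]_m)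
  (x : 'cV[R]_n) : Prop :=
  (forall z, lasso_obj lam T y x <= lasso_obj lam T y z) /\
  (forall z, (forall w, lasso_obj lam T y z <= lasso_obj lam T y w) -> z = x).

Definition lasso_xi (lam : R) (T : 'M[R]_(m, n)) (y : 'cV[R]_m) (x : 'cV[R]_n)
  : 'cV[R]_n := lam *: (T^T *m (y - T *m x)).

(* T^J : the submatrix of T made of the columns indexed by J (in increasing order) *)
Definition colsJ (T : 'M[R]_(m, n)) (J : {set 'I_n}) : 'M[R]_(m, #|J|) :=
  colsub (fun k : 'I_#|J| => enum_val k) T.

Definition SJ (T : 'M[R]_(m, n)) (J : {set 'I_n}) : 'M[R]_#|J| :=
  invmx ((colsJ T J)^T *m colsJ T J).

Definition positive_cone_condition (T : 'M[R]_(m, n)) : Prop :=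
  forall J : {set 'I_n}, J != set0 ->
    forall i : 'I_#|J|,
      0 <= SJ T J i i - \sum_(j < #|J| | j != i) `|SJ T J i j|.

End Lasso.

(* Main.v *)
Require Import Defs.
From HB Require Import structures.
From mathcomp Require Import all_boot all_order all_algebra.
From mathcomp Require Import reals.
From mathcomp Require Import lra ring.
Import Order.TTheory GRing.Theory Num.Theory.
Local Open Scope ring_scope.

Lemma quad_zero (R : realType) (d a X : R) : 0 < X ->
  (forall t, `|t| < X -> 0 <= t * d + t^+2 * a) -> d = 0.
Proof.
move=> X0 H; apply/eqP; apply/negPn/negP => d0.
have ad : 0 < `|d| by rewrite normr_gt0.
pose e := Num.min (X / 2) (`|d| / (2 * `|a| + 1)).
have a0 : 0 <= `|a| := normr_ge0 a.
have ha : a <= `|a| := ler_norm a.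
have he1 : e <= X / 2 by rewrite ge_min lexx.
have he2 : e <= `|d| / (2 * `|a| + 1) by rewrite ge_min lexx orbT.
have e0 : 0 < e.
  rewrite lt_min; apply/andP; split; first lra.
  by apply: divr_gt0 => //; lra.
clearbody e.
have he2' : e * (2 * `|a| + 1) <= `|d|.
  by rewrite -ler_pdivlMr //; lra.
have H1 : 0 <= e * d + e * e * a.
  by rewrite -expr2; apply: H; rewrite ger0_norm; lra.
have H2 : 0 <= - e * d + e * e * a.
  by rewrite -expr2 -sqrrN; apply: H; rewrite normrN ger0_norm; lra.
have ea : e * a <= e * `|a| by rewrite ler_pM2l.
have E1 : - d <= e * a.
  rewrite -(ler_pM2l e0); lra.
have E2 : d <= e * a.
  rewrite -(ler_pM2l e0); lra.
have ea0 : 0 <= e * `|a| by rewrite mulr_ge0 // ltW.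
rewrite mulrDr mulr1 mulrCA in he2'.
case: (lerP 0 d) => dd.
- rewrite (ger0_norm dd) in he2' ad; lra.
- rewrite (ltr0_norm dd) in he2' ad; lra.
Qed.

Lemma abs_shift (R : realType) (x t : R) : x != 0 -> `|t| < `|x| ->
  `|x + t| = `|x| + Num.sg x * t.
Proof.
move=> x0 ht; case: (ltrP 0 x) => hx.
- rewrite (gtr0_sg hx) mul1r (gtr0_norm hx) in ht *.
  have : -x < t by move: (ler_norm (-t)); rewrite normrN; lra.
  by move=> h; rewrite ger0_norm; lra.
- have hx' : x < 0 by rewrite lt_neqAle x0 hx.
  rewrite (ltr0_sg hx') mulN1r (ltr0_norm hx') in ht *.
  have : t < -x by move: (ler_norm t); lra.
  by move=> h; rewrite ler0_norm; lra.
Qed.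

Lemma expand_sq (R : realType) (m n : nat) (T : 'M[R]_(m, n)) y x (i : 'I_n) (t : R) :
  sqnorm2 (T *m (x + t *: delta_mx i 0) - y) = sqnorm2 (T *m x - y)
   + t * (2 * \sum_(k < m) (T *m x - y) k 0 * T k i) + t ^+ 2 * \sum_(k < m) T k i ^+ 2.
Proof.
rewrite /sqnorm2 mulmxDr -scalemxAr -colE !mulr_sumr -!big_split /=.
by apply: eq_bigr => k _; rewrite !mxE; ring.
Qed.

Lemma expand_n1 (R : realType) (n : nat) (x : 'cV[R]_n) (i : 'I_n) (t : R) :
  norm1 (x + t *: delta_mx i 0) = norm1 x + (`|x i 0 + t| - `|x i 0|).
Proof.
rewrite /norm1 (bigD1 i) //= [X in _ = X + _](bigD1 i) //=.
rewrite !mxE eqxx /= mulr1.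
have -> : \sum_(k < n | k != i) `|(x + t *: delta_mx i 0) k 0| =
          \sum_(k < n | k != i) `|x k 0|.
  by apply: eq_bigr => k ki; rewrite !mxE (negbTE ki) /= mulr0 addr0.
ring.
Qed.

Lemma xi_entry (R : realType) (m n : nat) (T : 'M[R]_(m, n)) y lam x (i : 'I_n) :
  lasso_xi lam T y x i 0 = - lam * \sum_(k < m) (T *m x - y) k 0 * T k i.
Proof.
rewrite /lasso_xi !mxE mulNr -mulrN -sumrN; congr (_ * _).
by apply: eq_bigr => k _; rewrite !mxE; ring.
Qed.

Lemma stationary (R : realType) (m n : nat) (T : 'M[R]_(m, n)) y lam x (i : 'I_n) :
  (forall z, lasso_obj lam T y x <= lasso_obj lam T y z) -> x i 0 != 0 ->
  lasso_xi lam T y x i 0 = Num.sg (x i 0).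
Proof.
move=> Hmin x0.
suff : Num.sg (x i 0) - lasso_xi lam T y x i 0 = 0 by move/eqP; rewrite subr_eq0 => /eqP.
apply: (@quad_zero R _ (lam / 2 * \sum_(k < m) T k i ^+ 2) `|x i 0|).
  by rewrite normr_gt0.
move=> t ht.
have := Hmin (x + t *: delta_mx i 0).
rewrite /lasso_obj expand_sq expand_n1 abs_shift // xi_entry.
set S1 := sqnorm2 _; set S2 := \sum_(k < m) _ * _; set S3 := \sum_(k < m) _.
move=> h; rewrite -subr_ge0 in h.
suff <- : lam / 2 * (S1 + t * (2 * S2) + t ^+ 2 * S3) + (norm1 x + (`|x i 0| + Num.sg (x i 0) * t - `|x i 0|)) -
    (lam / 2 * S1 + norm1 x) = t * (Num.sg (x i 0) - - lam * S2) + t ^+ 2 * (lam / 2 * S3) by [].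
by field.
Qed.

Lemma colsJ_entry (R : realType) (m n : nat) (T : 'M[R]_(m, n)) (J : {set 'I_n}) a j :
  colsJ T J a j = T a (enum_val j).
Proof. by rewrite /colsJ mxE. Qed.

Lemma mul_support (R : realType) (m n : nat) (T : 'M[R]_(m, n)) (J : {set 'I_n})
  (u : 'cV[R]_n) : (forall a, a \notin J -> u a 0 = 0) ->
  T *m u = colsJ T J *m \col_j u (enum_val j) 0.
Proof.
move=> u0; apply/matrixP => a b; rewrite (ord1 b) !mxE.
rewrite (bigID (fun c => c \in J)) /= [X in _ + X]big1 ?addr0; last first.
  by move=> c /u0 ->; rewrite mulr0.
rewrite (big_enum_val (fun c => T a c * u c 0)) /=.
by apply: eq_bigr => j _; rewrite !mxE.
Qed.

Lemma trmul_entry (R : realType) (m n : nat) (T : 'M[R]_(m, n)) (J : {set 'I_n})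
  (v : 'cV[R]_m) j : ((colsJ T J)^T *m v) j 0 = (T^T *m v) (enum_val j) 0.
Proof. by rewrite !mxE; apply: eq_bigr => a _; rewrite !mxE. Qed.

Lemma sum_enum_pick (R : realType) (n : nat) (J : {set 'I_n}) (f : 'I_#|J| -> R) j0 :
  \sum_j (enum_val j0 == enum_val j)%:R * f j = f j0.
Proof.
rewrite (bigD1 j0) //= eqxx mul1r big1 ?addr0 // => j jj.
by rewrite (inj_eq enum_val_inj) eq_sym (negbTE jj) mul0r.
Qed.

Lemma gram_unit (R : realType) (m n : nat) (T : 'M[R]_(m, n)) (J : {set 'I_n}) :
  (forall x : 'cV[R]_n, T *m x = 0 -> x = 0) ->
  (colsJ T J)^T *m colsJ T J \in unitmx.
Proof.
move=> Tinj; rewrite unitmxE unitfE; apply/negP => /det0P [v v0 vA].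
set C := colsJ T J in vA *.
set w := C *m v^T.
have h : w^T *m w = 0.
  by rewrite /w trmx_mul trmxK mulmxA -(mulmxA v) vA mul0mx.
have w0 : forall a, w a 0 = 0.
  have := congr1 (fun M : 'M[R]_1 => M 0 0) h; rewrite !mxE => hs.
  have H : forall a, w^T 0 a * w a 0 = 0.
    move=> a; apply: (@psumr_eq0P _ _ predT (fun a => w^T 0 a * w a 0)) => //.
    by move=> b _; rewrite mxE -expr2 sqr_ge0.
  by move=> a; have := H a; rewrite mxE; move/eqP; rewrite mulf_eq0 orbb => /eqP.
pose u : 'cV[R]_n := \col_b \sum_j (b == enum_val j)%:R * v 0 j.
have us : forall a, a \notin J -> u a 0 = 0.
  move=> a aJ; rewrite mxE big1 // => j _.
  case: eqP => [ej|]; last by rewrite mul0r.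
  by move: aJ; rewrite ej enum_valP.
have ue : \col_j u (enum_val j) 0 = v^T.
  by apply/matrixP => j b; rewrite (ord1 b) !mxE sum_enum_pick.
have : T *m u = 0.
  rewrite (@mul_support _ _ _ T J u us) ue -/C -/w; apply/matrixP => a b.
  by rewrite (ord1 b) w0 [in RHS]mxE.
move/Tinj => u00; move/negP: v0; apply; apply/eqP/matrixP => a j.
rewrite (ord1 a).
have := congr1 (fun M : 'cV[R]_#|J| => M j 0) ue; rewrite u00 !mxE.
by move=> <-.
Qed.

Theorem mainTheorem15 (R : realType) (m n : nat) (T : 'M[R]_(m, n)) (y : 'cV[R]_m)
  (lam mu : R) (xl xm : 'cV[R]_n) :
  (forall x : 'cV[R]_n, T *m x = 0 -> x = 0) ->
  positive_cone_condition T ->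
  0 < mu -> mu < lam ->
  is_unique_lasso_min lam T y xl ->
  is_unique_lasso_min mu T y xm ->
  (forall i : 'I_n, xl i 0 = 0 -> xm i 0 = 0) ->
  (forall i : 'I_n, xl i 0 != 0 -> lasso_xi lam T y xl i 0 = lasso_xi mu T y xm i 0) ->
  forall i : 'I_n, xl i 0 != 0 -> xm i 0 * Num.sg (xl i 0) <= `|xl i 0|.
Proof.
move=> Tinj pcc mu0 mulam [minl _] [minm _] Nsub xieq i xi0.
have lam0 : 0 < lam by apply: lt_trans mulam.
set J := [set a | xl a 0 != 0].
have iJ : i \in J by rewrite inE.
have suppl : forall a, a \notin J -> xl a 0 = 0 by move=> a; rewrite inE negbK => /eqP.
have suppm : forall a, a \notin J -> xm a 0 = 0 by move=> a /suppl /Nsub.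
have evJ : forall j : 'I_#|J|, xl (enum_val j) 0 != 0.
  by move=> j; have := enum_valP j; rewrite inE.
set C := colsJ T J.
pose xlJ : 'cV[R]_#|J| := \col_(j < #|J|) xl (enum_val j) 0.
pose xmJ : 'cV[R]_#|J| := \col_(j < #|J|) xm (enum_val j) 0.
pose sJ : 'cV[R]_#|J| := \col_(j < #|J|) Num.sg (xl (enum_val j) 0).
have eqL : lam *: (C^T *m (y - C *m xlJ)) = sJ.
  apply/matrixP => j b; rewrite (ord1 b) -(@mul_support _ _ _ T J xl suppl).
  rewrite [LHS]mxE /C trmul_entry.
  have := @stationary _ _ _ T y lam xl _ minl (evJ j); rewrite /lasso_xi mxE => ->.
  by rewrite mxE.
have eqM : mu *: (C^T *m (y - C *m xmJ)) = sJ.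
  apply/matrixP => j b; rewrite (ord1 b) -(@mul_support _ _ _ T J xm suppm).
  rewrite [LHS]mxE /C trmul_entry.
  have := xieq _ (evJ j); rewrite (@stationary _ _ _ T y lam xl _ minl (evJ j)) /lasso_xi mxE => <-.
  by rewrite mxE.
pose A := C^T *m C.
have Au : A \in unitmx by apply: gram_unit.
have e1 : C^T *m y - A *m xlJ = lam^-1 *: sJ.
  by rewrite -eqL scalerA mulVf ?gt_eqF // scale1r mulmxBr mulmxA.
have e2 : C^T *m y - A *m xmJ = mu^-1 *: sJ.
  by rewrite -eqM scalerA mulVf ?gt_eqF // scale1r mulmxBr mulmxA.
have key : A *m (xlJ - xmJ) = (mu^-1 - lam^-1) *: sJ.
  by rewrite scalerBl -e1 -e2 mulmxBr opprB [RHS]addrC [RHS]addrA subrK.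
have key2 : xlJ - xmJ = (mu^-1 - lam^-1) *: (SJ T J *m sJ).
  by rewrite scalemxAr -key /SJ -/C -/A mulKmx.
pose j0 := enum_rank_in iJ i.
have ej0 : enum_val j0 = i by apply: enum_rankK_in.
have := congr1 (fun M : 'cV[R]_#|J| => M j0 0) key2.
rewrite !mxE ej0.
set S := SJ T J.
set c := mu^-1 - lam^-1.
have c0 : 0 < c.
  by rewrite /c subr_gt0 ltf_pV2 // posrE.
rewrite (bigD1 j0) //= !mxE ej0.
set Q := \sum_(j < #|J| | j != j0) _.
move=> h.
have -> : xm i 0 = xl i 0 - c * (S j0 j0 * Num.sg (xl i 0) + Q) by rewrite -h; ring.
have ss : Num.sg (xl i 0) * Num.sg (xl i 0) = 1 by rewrite -expr2 sqr_sg xi0.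
have pc := pcc J ltac:(by apply/set0Pn; exists i) j0.
have hb : `|Num.sg (xl i 0) * Q| <= \sum_(j < #|J| | j != j0) `|S j0 j|.
  rewrite normrM normr_sg xi0 mul1r /Q.
  apply: le_trans (ler_norm_sum _ _ _) _; apply: ler_sum => j _.
  rewrite !mxE normrM normr_sg; case: (_ != 0); rewrite ?mulr1 ?mulr0 //.
have hq := ler_norm (- (Num.sg (xl i 0) * Q)).
rewrite normrN in hq.
rewrite -/S in pc.
have hprod : 0 <= c * (S j0 j0 + Num.sg (xl i 0) * Q).
  by apply: mulr_ge0; [apply: ltW | lra].
rewrite normrEsg.
have -> : (xl i 0 - c * (S j0 j0 * Num.sg (xl i 0) + Q)) * Num.sg (xl i 0) =
   Num.sg (xl i 0) * xl i 0 - c * (S j0 j0 * (Num.sg (xl i 0) * Num.sg (xl i 0)) + Num.sg (xl i 0) * Q).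
  ring.
rewrite ss mulr1; lra.
Qed.
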